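(* Let $\Gamma$ be a totally ordered group, let $\mathcal{G}$ be a $\Gamma$-graded ample Hausdorff groupoid with continuous cocycle $c:\mathcal{G}\to\Gamma$, and let $R$ be a field. If the Steinberg algebra $A_R(\mathcal{G})$ is a left SF-ring, then the unit space $\mathcal{G}^{(0)}$ is $\Gamma$-aperiodic, i.e. for every $u\in\mathcal{G}^{(0)}$ one has $c(x)=\varepsilon$ for all $x\in\mathcal{G}_u^u$.
   Context: A topological groupoid $\mathcal{G}$ has domain and range maps $d(x)=x^{-1}x$, $r(x)=xx^{-1}$ and unit space $\mathcal{G}^{(0)}=d(\mathcal{G})$. It is étale if $d$ is a local homeomorphism; an open bisection is an open $U\subseteq\mathcal{G}$ with $d|_U,r|_U$ homeomorphisms onto open subsets of $\mathcal{G}^{(0)}$; $\mathcal{G}$ is ample if it is étale with a basis of compact open bisections. For a discrete group $\Gamma$ with identity $\varepsilon$, a $\Gamma$-grading of $\mathcal{G}$ is a continuous map $c:\mathcal{G}\to\Gamma$ with $c(gh)=c(g)c(h)$ for composable $g,h$. The isotropy group at $u$ is $\mathcal{G}_u^u=\{\gamma: d(\gamma)=r(\gamma)=u\}$; $u$ is $\Gamma$-aperiodic if $\mathcal{G}_u^u\subseteq c^{-1}(\varepsilon)$. The Steinberg algebra $A_R(\mathcal{G})$ is the $R$-algebra of compactly supported locally constant functions $\mathcal{G}\to R$ with pointwise addition and convolution $(f*g)(\gamma)=\sum_{\gamma=\alpha\beta}f(\alpha)g(\beta)$; it is a ring with local units. For a ring $A$ with local units, $A$ is a left SF-ring if every simple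 unital left $A$-module $N$ (unital meaning $AN=N$) is flat, i.e. $-\otimes_A N$ is exact on the category of unital right $A$-modules. *)

(* Defs.v *)
From HB Require Import structures.
From mathcomp Require Import all_boot all_order all_algebra.
From Stdlib Require Import ClassicalEpsilon List.
Set Implicit Arguments. Unset Strict Implicit. Unset Printing Implicit Defensive.
Import GRing.Theory.
Local Open Scope ring_scope.

Record OrderedGroup := {
  og :> Type;
  ogmul : og -> og -> og;
  ogone : og;
  oginv : og -> og;
  ogmulA : forall a b c, ogmul (ogmul a b) c = ogmul a (ogmul b c);
  ogmul1g : forall a, ogmul ogone a = a;
  ogmulg1 : forall a, ogmul a ogone = a;
  ogmulVg : forall a, ogmul (oginv a) a = ogone;
  ogmulgV : forall a, ogmul a (oginv a) = ogone;
  ogle : og -> og -> Prop;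
  ogle_refl : forall a, ogle a a;
  ogle_anti : forall a b, ogle a b -> ogle b a -> a = b;
  ogle_trans : forall a b c, ogle a b -> ogle b c -> ogle a c;
  ogle_total : forall a b, ogle a b \/ ogle b a;
  ogle_mull : forall a b c, ogle a b -> ogle (ogmul c a) (ogmul c b);
  ogle_mulr : forall a b c, ogle a b -> ogle (ogmul a c) (ogmul b c)
}.

(* Groupoids (Renault's axioms): gcomp x y means (x,y) is composable. *)
Record Groupoid := {
  gcar :> Type;
  gcomp : gcar -> gcar -> Prop;
  gmul : gcar -> gcar -> gcar;
  ginv : gcar -> gcar;
  ginvK : forall x, ginv (ginv x) = x;
  gcompA : forall x y z, gcomp x y -> gcomp y z ->
     [/\ gcomp (gmul x y) z, gcomp x (gmul y z) &
         gmul (gmul x y) z = gmul x (gmul y z)];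
  gcompVx : forall x, gcomp (ginv x) x;
  gmulKV : forall x y, gcomp x y -> gmul (ginv x) (gmul x y) = y;
  gmulKr : forall x y, gcomp x y -> gmul (gmul x y) (ginv y) = x
}.

Section GroupoidDefs.
Variable G : Groupoid.
Definition gdom (x : G) : G := gmul (ginv x) x.
Definition grng (x : G) : G := gmul x (ginv x).
Definition unit_space (u : G) : Prop := exists x, u = gdom x.
End GroupoidDefs.

(* Topological groupoids: a topology (given by its open sets) making
   inversion continuous and multiplication continuous on G^(2)
   (with the relative product topology). *)
Record TopGroupoid := {
  tgr :> Groupoid;
  topen : (tgr -> Prop) -> Prop;
  topen_full : topen (fun _ => True);
  topen_inter : forall U V, topen U -> topen V -> topen (fun x => U x /\ V x);
  topen_union : forall (I : Type) (F : I -> tgr -> Prop),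
      (forall i, topen (F i)) -> topen (fun x => exists i, F i x);
  tinv_cont : forall W, topen W -> topen (fun x => W (ginv x));
  tmul_cont : forall W, topen W -> forall x y, gcomp x y -> W (gmul x y) ->
      exists U V, [/\ topen U, topen V, U x, V y &
        forall a b, U a -> V b -> gcomp a b -> W (gmul a b)]
}.

Section TopDefs.
Variable G : TopGroupoid.
Notation op := (@topen G).

Definition open_in_units (S : G -> Prop) : Prop :=
  (forall u, S u -> unit_space u) /\
  exists O, op O /\ forall u, unit_space u -> (S u <-> O u).

Definition image (phi : G -> G) (V : G -> Prop) : G -> Prop :=
  fun y => exists x, V x /\ y = phi x.

Definition homeo_onto_open_units (phi : G -> G) (U : G -> Prop) : Prop :=
  [/\ forall x y, U x -> U y -> phi x = phi y -> x = y,
      forall O, op O -> op (fun x => U x /\ O (phi x)),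
      open_in_units (image phi U) &
      forall V, op V -> (forall x, V x -> U x) -> open_in_units (image phi V)].

Definition etale : Prop :=
  forall x : G, exists U, [/\ op U, U x & homeo_onto_open_units (@gdom G) U].

Definition open_bisection (U : G -> Prop) : Prop :=
  [/\ op U, homeo_onto_open_units (@gdom G) U & homeo_onto_open_units (@grng G) U].

Definition compact (K : G -> Prop) : Prop :=
  forall (I : Type) (F : I -> G -> Prop), (forall i, op (F i)) ->
    (forall x, K x -> exists i, F i x) ->
    exists l : list I, forall x, K x -> exists i, In i l /\ F i x.

Definition ample : Prop :=
  etale /\ forall W (x : G), op W -> W x ->
    exists B, [/\ open_bisection B, compact B, B x & forall y, B y -> W y].

Definition hausdorff : Prop :=
  forall x y : G, x <> y -> exists U V,
    [/\ op U, op V, U x, V y & forall z, ~ (U z /\ V z)].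

Definition closure (S : G -> Prop) : G -> Prop :=
  fun x => forall U, op U -> U x -> exists y, U y /\ S y.

(* Gamma-grading: continuous (Gamma discrete) cocycle *)
Definition grading (Gam : OrderedGroup) (c : G -> Gam) : Prop :=
  (forall t, op (fun x => c x = t)) /\
  (forall x y, gcomp x y -> c (gmul x y) = ogmul (c x) (c y)).

Definition aperiodic_unit (Gam : OrderedGroup) (c : G -> Gam) (u : G) : Prop :=
  forall x, gdom x = u -> grng x = u -> c x = ogone Gam.

Variable R : fieldType.

Definition locally_constant (f : G -> R) : Prop :=
  forall x, exists U, [/\ op U, U x & forall y, U y -> f y = f x].

Definition in_steinberg (f : G -> R) : Prop :=
  locally_constant f /\ compact (closure (fun x => f x != 0)).

Definition fadd (f g : G -> R) : G -> R := fun x => f x + g x.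

Definition conv_value (f g : G -> R) (gam : G) (s : R) : Prop :=
  exists l : list (G * G)%type, [/\ NoDup l,
     forall p, In p l -> gcomp p.1 p.2 /\ gmul p.1 p.2 = gam,
     forall a b, gcomp a b -> gmul a b = gam -> f a * g b != 0 -> In (a, b) l &
     s = \sum_(p <- l) f p.1 * g p.2].

Definition conv (f g : G -> R) : G -> R :=
  fun gam => epsilon (inhabits (0 : R)) (conv_value f g gam).

Definition left_module (N : zmodType) (act : (G -> R) -> N -> N) : Prop :=
  [/\ forall f g n, in_steinberg f -> in_steinberg g ->
        act (fadd f g) n = act f n + act g n,
      forall f n n', in_steinberg f -> act f (n + n') = act f n + act f n' &
      forall f g n, in_steinberg f -> in_steinberg g ->
        act (conv f g) n = act f (act g n)].

Definition right_module (M : zmodType) (ract : M -> (G -> R) -> M) : Prop :=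
  [/\ forall f g m, in_steinberg f -> in_steinberg g ->
        ract m (fadd f g) = ract m f + ract m g,
      forall f m m', in_steinberg f -> ract (m + m') f = ract m f + ract m' f &
      forall f g m, in_steinberg f -> in_steinberg g ->
        ract m (conv f g) = ract (ract m f) g].

(* unital: A N = N *)
Definition left_unital (N : zmodType) (act : (G -> R) -> N -> N) : Prop :=
  forall n : N, exists l : list ((G -> R) * N)%type,
    (forall p, In p l -> in_steinberg p.1) /\ n = \sum_(p <- l) act p.1 p.2.

Definition right_unital (M : zmodType) (ract : M -> (G -> R) -> M) : Prop :=
  forall m : M, exists l : list (M * (G -> R))%type,
    (forall p, In p l -> in_steinberg p.2) /\ m = \sum_(p <- l) ract p.1 p.2.

Definition left_submodule (N : zmodType) (act : (G -> R) -> N -> N)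
    (S : N -> Prop) : Prop :=
  [/\ S 0, forall n n', S n -> S n' -> S (n + n'), forall n, S n -> S (- n) &
      forall f n, in_steinberg f -> S n -> S (act f n)].

Definition simple_left (N : zmodType) (act : (G -> R) -> N -> N) : Prop :=
  (exists n : N, n <> 0) /\
  forall S, left_submodule act S -> (forall n, S n -> n = 0) \/ (forall n, S n).

Definition right_linear (M M' : zmodType) (ract : M -> (G -> R) -> M)
    (ract' : M' -> (G -> R) -> M') (phi : M -> M') : Prop :=
  (forall m m', phi (m + m') = phi m + phi m') /\
  (forall m f, in_steinberg f -> phi (ract m f) = ract' (phi m) f).

Definition balanced (M N Z : zmodType) (ract : M -> (G -> R) -> M)
    (act : (G -> R) -> N -> N) (beta : M -> N -> Z) : Prop :=
  [/\ forall m m' n, beta (m + m') n = beta m n + beta m' n,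
      forall m n n', beta m (n + n') = beta m n + beta m n' &
      forall m f n, in_steinberg f -> beta (ract m f) n = beta m (act f n)].

(* The element  sum_i m_i (x) n_i  of M (x)_A N is zero; the tensor product
   is given by its universal property w.r.t. balanced maps. *)
Definition tensor_zero (M N : zmodType) (ract : M -> (G -> R) -> M)
    (act : (G -> R) -> N -> N) (l : list (M * N)%type) : Prop :=
  forall (Z : zmodType) (beta : M -> N -> Z), balanced ract act beta ->
    \sum_(p <- l) beta p.1 p.2 = 0.

Definition tmap (M M' N : zmodType) (phi : M -> M') (l : list (M * N)%type)
  : list (M' * N)%type := map (fun p => (phi p.1, p.2)) l.

Definition tneg (M N : zmodType) (l : list (M * N)%type) : list (M * N)%type :=
  map (fun p => (- p.1, p.2)) l.

(* flat: - (x)_A N is exact on unital right A-modules, i.e. sends every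
   sequence M1 -phi-> M2 -psi-> M3 exact at M2 to one exact at M2 (x) N *)
Definition flat_left (N : zmodType) (act : (G -> R) -> N -> N) : Prop :=
  forall (M1 M2 M3 : zmodType) (r1 : M1 -> (G -> R) -> M1)
    (r2 : M2 -> (G -> R) -> M2) (r3 : M3 -> (G -> R) -> M3)
    (phi : M1 -> M2) (psi : M2 -> M3),
    right_module r1 -> right_unital r1 ->
    right_module r2 -> right_unital r2 ->
    right_module r3 -> right_unital r3 ->
    right_linear r1 r2 phi -> right_linear r2 r3 psi ->
    (forall m : M2, (exists m1, m = phi m1) <-> psi m = 0) ->
    forall t : list (M2 * N)%type,
      (exists s : list (M1 * N)%type, tensor_zero r2 act (tmap phi s ++ tneg t))
      <-> tensor_zero r3 act (tmap psi t).

Definition left_SF : Prop :=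
  forall (N : zmodType) (act : (G -> R) -> N -> N),
    left_module act -> left_unital act -> simple_left act -> flat_left act.

End TopDefs.

(* Main.v *)
Require Import Defs.
From Stdlib Require Import ClassicalEpsilon List.
From HB Require Import structures.
From mathcomp Require Import all_boot all_order all_algebra.
From mathcomp Require Import finmap boolp classical_sets functions cardinality fsbigop.
Set Implicit Arguments. Unset Strict Implicit. Unset Printing Implicit Defensive.
Import GRing.Theory.
Local Open Scope ring_scope.
Local Open Scope classical_set_scope.


Section GAlg.
Variable G : Groupoid.
Implicit Types x y z a b v : G.
Local Notation mul := (@gmul G).
Local Notation inv := (@ginv G).
Local Notation comp := (@gcomp G).

Lemma compxV x : comp x (inv x).
Proof. by have := gcompVx (inv x); rewrite ginvK. Qed.

Lemma mul_dom x : mul x (gdom x) = x.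
Proof. by have := gmulKV (gcompVx x); rewrite ginvK. Qed.

Lemma mul_rng x : mul (grng x) x = x.
Proof. by have := gmulKr (compxV x); rewrite ginvK. Qed.

Lemma comp_dr a b : comp a b -> gdom a = grng b.
Proof.
move=> hab.
have [_ h1 _] := gcompA (gcompVx a) hab.
have [h2 _ _] := gcompA hab (compxV b).
have [_ _ e] := gcompA h1 h2.
by move: e; rewrite gmulKV // gmulKr.
Qed.

Lemma comp_rd a b : gdom a = grng b -> comp a b.
Proof.
move=> e.
have [_ h1 _] := gcompA (compxV a) (gcompVx a).
have [h2 _ _] := gcompA (compxV b) (gcompVx b).
rewrite -[b]mul_rng.
have h1' : comp a (grng b) by rewrite -e.
by have [_ ? _] := gcompA h1' h2.
Qed.

Lemma compE a b : comp a b <-> gdom a = grng b.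
Proof. by split; [apply: comp_dr|apply: comp_rd]. Qed.

Lemma dom_inv x : gdom (inv x) = grng x.
Proof. by rewrite /gdom /grng ginvK. Qed.

Lemma rng_inv x : grng (inv x) = gdom x.
Proof. by rewrite /gdom /grng ginvK. Qed.

Lemma dom_mul a b : comp a b -> gdom (mul a b) = gdom b.
Proof.
move=> hab; have [h _ _] := gcompA hab (compxV b).
by rewrite (comp_dr h) rng_inv.
Qed.

Lemma rng_mul a b : comp a b -> grng (mul a b) = grng a.
Proof.
move=> hab; have [_ h _] := gcompA (gcompVx a) hab.
by rewrite -(comp_dr h) dom_inv.
Qed.

Lemma mulA a b c : comp a b -> comp b c -> mul (mul a b) c = mul a (mul b c).
Proof. by move=> h1 h2; have [_ _ ->] := gcompA h1 h2. Qed.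

Lemma dom_dom x : gdom (gdom x) = gdom x.
Proof. exact: dom_mul (gcompVx x). Qed.

Lemma rng_dom x : grng (gdom x) = gdom x.
Proof. by rewrite [in LHS]/gdom (rng_mul (gcompVx x)) rng_inv. Qed.

Lemma dom_rng x : gdom (grng x) = grng x.
Proof. by rewrite [in LHS]/grng (dom_mul (compxV x)) dom_inv. Qed.

Lemma rng_rng x : grng (grng x) = grng x.
Proof. exact: rng_mul (compxV x). Qed.

Lemma unitP v : unit_space v <-> gdom v = v.
Proof.
split=> [[x ->]|e]; first exact: dom_dom.
by exists v; rewrite e.
Qed.

Lemma unit_rng v : unit_space v -> grng v = v.
Proof. by case=> x ->; rewrite rng_dom. Qed.

Lemma unit_dom v : unit_space v -> gdom v = v.
Proof. by move/unitP. Qed.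

Lemma unit_inv v : unit_space v -> inv v = v.
Proof.
move=> hv.
have e1 : mul (grng (inv v)) (inv v) = inv v := mul_rng (inv v).
rewrite rng_inv (unit_dom hv) in e1.
by rewrite -e1 -/(grng v) unit_rng.
Qed.

Lemma unit_mull v x : unit_space v -> gdom x = v -> mul x v = x.
Proof. by move=> _ <-; rewrite mul_dom. Qed.

Lemma unit_mulr v x : unit_space v -> grng x = v -> mul v x = x.
Proof. by move=> _ <-; rewrite mul_rng. Qed.

Lemma mulVx x : mul (inv x) x = gdom x.
Proof. by []. Qed.

Lemma mulxV x : mul x (inv x) = grng x.
Proof. by []. Qed.

Lemma mulK a b : comp a b -> mul (inv a) (mul a b) = b.
Proof. exact: gmulKV. Qed.

Lemma mulKr a b : comp a b -> mul (mul a b) (inv b) = a.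
Proof. exact: gmulKr. Qed.

Lemma mul_cancel a b b' : comp a b -> comp a b' -> mul a b = mul a b' -> b = b'.
Proof. by move=> h h' e; rewrite -(mulK h) e mulK. Qed.

Lemma inv_inj : injective inv.
Proof. by move=> x y e; rewrite -(ginvK x) e ginvK. Qed.

Lemma unit_dom_is x : unit_space (gdom x).
Proof. by exists x. Qed.

Lemma unit_rng_is x : unit_space (grng x).
Proof. by exists (inv x); rewrite /gdom /grng ginvK. Qed.

Lemma inv_mul a b : comp a b -> inv (mul a b) = mul (inv b) (inv a).
Proof.
move=> hab; have e := comp_dr hab.
have hba : comp (inv b) (inv a) by apply/compE; rewrite dom_inv rng_inv.
have h1 : comp (mul a b) (inv (mul a b)) := compxV _.
have h2 : comp (mul a b) (mul (inv b) (inv a)).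
  by apply/compE; rewrite (dom_mul hab) (rng_mul hba) rng_inv.
apply: (mul_cancel h1 h2).
have hb : comp b (inv b) := compxV b.
have hbba : comp b (mul (inv b) (inv a)).
  by apply/compE; rewrite (rng_mul hba) rng_inv.
rewrite mulxV (rng_mul hab) (mulA hab hbba) -(mulA hb hba) mulxV.
have -> : mul (grng b) (inv a) = inv a.
  by rewrite -e -(rng_inv a) mul_rng.
by [].
Qed.

End GAlg.

Lemma mulKV' (G : Groupoid) (a k : G) : grng a = grng k ->
  gmul a (gmul (ginv a) k) = k.
Proof.
move=> e.
have c1 : gcomp (ginv a) k by apply/compE; rewrite dom_inv.
rewrite -mulA ?mulxV ?e ?mul_rng //.
by apply/compE; rewrite rng_inv.
Qed.


Lemma InE (T : eqType) (x : T) (l : seq T) : In x l <-> x \in l.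
Proof.
elim: l => [|y l IH] //=; rewrite in_cons; split.
- by case=> [->|/IH ->]; rewrite ?eqxx ?orbT.
- by case/orP=> [/eqP ->|/IH]; [left|right].
Qed.

Lemma NoDupE (T : eqType) (l : seq T) : NoDup l <-> uniq l.
Proof.
elim: l => [|y l IH] /=; first by split=> // _; constructor.
split.
- move=> h; inversion h; subst; apply/andP; split; last by apply/IH.
  by apply/negP => /InE.
- case/andP=> h1 h2; constructor; last by apply/IH.
  by move/InE; apply/negP.
Qed.

Lemma fin_of_list (T : eqType) (S : set T) (l : seq T) :
  (forall x, S x -> In x l) -> finite_set S.
Proof.
move=> h; apply: (sub_finite_set (B := [set` l])) => // x /h /InE.
by [].
Qed.

Section Top.
Variable G : TopGroupoid.
HB.instance Definition _ := gen_eqMixin (gcar (tgr G)).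
HB.instance Definition _ := gen_choiceMixin (gcar (tgr G)).

Local Notation op := (@topen G).

Lemma op_ext (S S' : G -> Prop) : (forall x, S x <-> S' x) -> op S -> op S'.
Proof.
by move=> h; have -> : S = S' by apply/funext => x; apply/propext.
Qed.

Lemma op_inter_list (I : Type) (l : seq I) (F : I -> G -> Prop) :
  (forall i, op (F i)) -> op (fun x => forall i, In i l -> F i x).
Proof.
move=> hF; elim: l => [|i l IH].
  by apply: op_ext (topen_full G) => x; split.
apply: op_ext (topen_inter (hF i) IH) => x /=; split.
- by case=> h1 h2 j [<-|/h2].
- by move=> h; split=> [|j hj]; apply: h; [left|right].
Qed.

Hypothesis Hhaus : hausdorff G.

Lemma compact_closed (K : G -> Prop) x : compact K -> ~ K x ->
  exists U, [/\ op U, U x & forall z, U z -> ~ K z].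
Proof.
move=> cK nKx.
have hs : forall b : {b : G | K b}, exists UV : (G -> Prop) * (G -> Prop),
    [/\ op UV.1, op UV.2, UV.1 x, UV.2 (sval b) & forall z, ~ (UV.1 z /\ UV.2 z)].
  move=> [b Kb] /=.
  have nxb : x <> b by move=> e; apply: nKx; rewrite e.
  have [U [V [? ? ? ? ?]]] := Hhaus nxb.
  by exists (U, V).
have [f hf] := choice hs.
have [l hl] := cK _ (fun i => (f i).2) (fun i => (let: And5 _ h _ _ _ := hf i in h))
  (fun y Ky => ex_intro _ (exist _ y Ky) (let: And5 _ _ _ h _ := hf (exist _ y Ky) in h)).
exists (fun z => forall i, In i l -> (f i).1 z); split.
- by apply: op_inter_list => i; case: (hf i).
- by move=> i _; case: (hf i).
- move=> z hz Kz; have [i [il hi]] := hl z Kz.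
  by case: (hf i) => _ _ _ _ /(_ z); apply; split; [exact: hz|exact: hi].
Qed.

Definition obis (B : G -> Prop) := open_bisection B /\ compact B.

Hypothesis Hample : ample G.

Lemma bis_at W x : op W -> W x -> exists B, [/\ obis B, B x & forall y, B y -> W y].
Proof.
move=> oW Wx; have [B [? ? ? ?]] := Hample.2 W x oW Wx.
by exists B; split.
Qed.

Lemma obis_open B : obis B -> op B.
Proof. by case=> -[]. Qed.

Lemma obis_rinj B : obis B -> forall x y, B x -> B y -> grng x = grng y -> x = y.
Proof. by case=> -[_ _ []]. Qed.

Lemma obis_dinj B : obis B -> forall x y, B x -> B y -> gdom x = gdom y -> x = y.
Proof. by case=> -[_ []]. Qed.

Lemma obis_dcont B : obis B -> forall O, op O -> op (fun x => B x /\ O (gdom x)).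
Proof. by case=> -[_ []]. Qed.

Lemma compact_fiber (K : G -> Prop) (p : G -> G) :
  compact K ->
  (forall B, obis B -> forall x y, B x -> B y -> p x = p y -> x = y) ->
  forall v, finite_set [set g | K g /\ p g = v].
Proof.
move=> cK pinj v.
have hs : forall b : {b : G | K b}, exists B, obis B /\ B (sval b).
  move=> b; have [B [hB hb _]] := @bis_at (fun _ => True) (sval b) (topen_full G) I.
  by exists B.
have [f hf] := choice hs.
have [l hl] := cK _ f (fun i => obis_open (hf i).1)
  (fun y Ky => ex_intro _ (exist _ y Ky) (hf (exist _ y Ky)).2).
pose pick i := xget v [set g | f i g /\ p g = v].
apply: (fin_of_list (l := map pick l)) => g [Kg pg].
have [i [il hi]] := hl g Kg.
have hex : exists g, f i g /\ p g = v by exists g.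
have [h1 h2] := xgetPex v hex.
have -> : g = pick i by apply: (pinj _ (hf i).1) => //; rewrite pg.
exact: in_map.
Qed.

End Top.


Section FSum.
Variable R : fieldType.

Lemma fsum_restrict (T : choiceType) (P A : set T) (F : T -> R) :
  (forall i, P i -> F i != 0 -> A i) ->
  \sum_(i \in P) F i = \sum_(i \in P `&` A) F i.
Proof.
move=> h; apply/esym/fsbig_widen => // i [Pi nPA] /=.
apply/eqP/negP => /negP nz; apply: nPA; split => //; exact: h.
Qed.

Lemma fsum_dbl_restrict (I J : choiceType) (P : set I) (Q : set J)
    (F : I -> J -> R) (A : set I) (B : set J) :
  (forall i j, P i -> Q j -> F i j != 0 -> A i /\ B j) ->
  \sum_(i \in P) \sum_(j \in Q) F i j = \sum_(i \in P `&` A) \sum_(j \in Q `&` B) F i j.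
Proof.
move=> h.
rewrite (eq_fsbigr (fun i => \sum_(j \in Q `&` B) F i j)); last first.
  move=> i /set_mem Pi; apply: fsum_restrict => j Qj nz; exact: (h i j Pi Qj nz).2.
apply: fsum_restrict => i Pi /fsbigN1 [j [Qj Bj] nz]; exact: (h i j Pi Qj nz).1.
Qed.

Lemma fsum_exchange (I J : choiceType) (P : set I) (Q : set J)
    (F : I -> J -> R) (A : set I) (B : set J) :
  finite_set A -> finite_set B ->
  (forall i j, P i -> Q j -> F i j != 0 -> A i /\ B j) ->
  \sum_(i \in P) \sum_(j \in Q) F i j = \sum_(j \in Q) \sum_(i \in P) F i j.
Proof.
move=> fA fB h.
rewrite (fsum_dbl_restrict h).
rewrite (@fsum_dbl_restrict J I Q P (fun j i => F i j) B A); last first.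
  by move=> j i Qj Pi nz; have [] := h i j Pi Qj nz.
by apply: exchange_fsbig; [apply: finite_setIr|apply: finite_setIr].
Qed.

Lemma fsum_split (T : choiceType) (P A : set T) (F H : T -> R) :
  finite_set A ->
  (forall i, P i -> F i != 0 -> A i) -> (forall i, P i -> H i != 0 -> A i) ->
  \sum_(i \in P) (F i + H i) = \sum_(i \in P) F i + \sum_(i \in P) H i.
Proof.
move=> fA hF hH.
rewrite (fsum_restrict hF) (fsum_restrict hH) (@fsum_restrict T P A).
  by rewrite fsbig_split //; apply: finite_setIr.
move=> i Pi nz; case: (eqVneq (F i) 0) => [e|]; last exact: hF.
by apply: hH => //; move: nz; rewrite e add0r.
Qed.

Lemma fsum_single (T : choiceType) (P : set T) (F : T -> R) x0 :
  P x0 -> (forall i, P i -> i <> x0 -> F i = 0) ->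
  \sum_(i \in P) F i = F x0.
Proof.
move=> Px0 h.
rewrite (@fsum_restrict T P [set x0]); last first.
  by move=> i Pi nz; apply: contrapT => ne; move/eqP: nz; apply; apply: h.
have -> : P `&` [set x0] = [set x0].
  by apply/seteqP; split=> [i [_ ->]|i ->] //.
by rewrite fsbig_set1.
Qed.

Lemma fsum0 (T : choiceType) (P : set T) (F : T -> R) :
  (forall i, P i -> F i = 0) -> \sum_(i \in P) F i = 0.
Proof. exact: fsbig1. Qed.

Lemma fsum_neq0 (T : choiceType) (P : set T) (F : T -> R) :
  \sum_(i \in P) F i != 0 -> exists i, P i /\ F i != 0.
Proof.
move=> h; have [i Pi nz] := @fsbigN1 R 0 +%R unit T P (fun _ => F) tt h.
by exists i.
Qed.

Lemma fsum_reindex (I J : choiceType) (P : set I) (Q : set J) (h : I -> J) (F : J -> R) :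
  (forall i, P i -> Q (h i)) ->
  (forall i i', P i -> P i' -> h i = h i' -> i = i') ->
  (forall j, Q j -> exists i, P i /\ h i = j) ->
  \sum_(j \in Q) F j = \sum_(i \in P) F (h i).
Proof.
move=> h1 h2 h3; apply: reindex_fsbig; split.
- by move=> i /h1.
- by move=> i i' /set_mem Pi /set_mem Pi'; apply: h2.
- by move=> j /h3 [i [Pi e]]; exists i.
Qed.

End FSum.


Section Stein.
Variable G : TopGroupoid.
Variable R : fieldType.
Hypothesis Hhaus : hausdorff G.
Hypothesis Hample : ample G.
Local Notation op := (@topen G).

Definition FF2 (f : G -> R) :=
  (forall v, finite_set [set g | f g != 0 /\ grng g = v]) /\
  (forall v, finite_set [set g | f g != 0 /\ gdom g = v]).

Lemma supp_closure (f : G -> R) x : f x != 0 -> Defs.closure (fun y : G => f y != 0) x.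
Proof. by move=> nz U _ Ux; exists x. Qed.

Lemma stein_FF2 f : in_steinberg f -> FF2 f.
Proof.
case=> _ cK; split=> v.
- apply: (sub_finite_set _ (compact_fiber Hample cK (@obis_rinj G) v)).
  by move=> g [nz e]; split=> //; apply: supp_closure.
- apply: (sub_finite_set _ (compact_fiber Hample cK (@obis_dinj G) v)).
  by move=> g [nz e]; split=> //; apply: supp_closure.
Qed.

Lemma FF2_inv f : FF2 f -> FF2 (fun x => f (ginv x)).
Proof.
case=> h1 h2; split=> v.
- apply: (sub_finite_set _ (finite_image (@ginv G) (h2 v))) => g [nz e].
  by exists (ginv g); rewrite ?ginvK //; split => //; rewrite dom_inv.
- apply: (sub_finite_set _ (finite_image (@ginv G) (h1 v))) => g [nz e].
  by exists (ginv g); rewrite ?ginvK //; split => //; rewrite rng_inv.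
Qed.

Definition sind (a : R) (B : G -> Prop) : G -> R := fun x => if `[< B x >] then a else 0.

Lemma sind_stein a B : obis B -> in_steinberg (sind a B).
Proof.
move=> oB; split.
- move=> x; case: (pselect (B x)) => Bx.
    exists B; split=> //; first exact: obis_open.
    by move=> y By; rewrite /sind !asboolT.
  have [U [oU Ux hU]] := compact_closed Hhaus (oB.2) Bx.
  exists U; split=> // y Uy; rewrite /sind !asboolF //; exact: hU.
- case: (eqVneq a 0) => [->|anz].
    have -> : Defs.closure (fun x => sind 0 B x != 0) = (fun _ => False).
      apply/funext => x; apply/propext; split=> // h.
      have [y [_]] := h _ (topen_full G) I.
      by rewrite /sind; case: ifP; rewrite eqxx.
    by move=> I F _ _; exists nil => x.
  have -> : Defs.closure (fun x => sind a B x != 0) = B.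
    apply/funext => x; apply/propext; split=> h; last first.
      by apply: supp_closure; rewrite /sind asboolT.
    apply: contrapT => Bx.
    have [U [oU Ux hU]] := compact_closed Hhaus (oB.2) Bx.
    have [y [Uy]] := h U oU Ux.
    by rewrite /sind asboolF ?eqxx //; apply: hU.
  exact: oB.2.
Qed.

Local Notation mul := (@gmul G).
Local Notation inv := (@ginv G).

Section ConvF.
Variables (f g : G -> R) (gam : G).
Let Q := [set p : G * G | gcomp p.1 p.2 /\ mul p.1 p.2 = gam].
Let H (p : G * G) := f p.1 * g p.2.
Let S := \sum_(a \in [set a | grng a = grng gam]) f a * g (mul (inv a) gam).

Let hQ a : grng a = grng gam -> Q (a, mul (inv a) gam).
Proof.
move=> e; have c1 : gcomp (inv a) gam by apply/compE; rewrite dom_inv.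
split => /=; first by apply/compE; rewrite (rng_mul c1) rng_inv.
rewrite -mulA ?mulxV ?e ?mul_rng //.
by apply/compE; rewrite rng_inv.
Qed.

Let sum_Q : \sum_(p \in Q) H p = S.
Proof.
rewrite (fsum_reindex (P := [set a | grng a = grng gam]) (h := fun a => (a, mul (inv a) gam))).
- by [].
- by move=> a; apply: hQ.
- by move=> a a' _ _ [].
- move=> [p1 p2] [/= c e]; exists p1; split => /=.
    by rewrite -e (rng_mul c).
  by rewrite -e mulK.
Qed.

Let sum_list (l : seq (G * G)) : NoDup l ->
  (forall p, In p l -> gcomp p.1 p.2 /\ mul p.1 p.2 = gam) ->
  (forall a b, gcomp a b -> mul a b = gam -> f a * g b != 0 -> In (a, b) l) ->
  \sum_(p <- l) H p = S.
Proof.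
move=> nd hin hcov.
rewrite fsbig_seq; last exact/NoDupE.
rewrite -sum_Q; apply: fsbig_widen.
- by move=> p /= /InE /hin.
- move=> [a b] [[/= c e] nl] /=; apply/eqP/negP => /negP nz.
  by apply: nl => /=; apply/InE; apply: hcov.
Qed.

Lemma conv_formula : (forall v, finite_set [set a | f a != 0 /\ grng a = v]) ->
  conv f g gam = S.
Proof.
move=> hfin.
have ex : exists s, conv_value f g gam s.
  pose D := [set p | Q p /\ H p != 0].
  have fD : finite_set D.
    apply: (sub_finite_set _ (finite_image (fun a => (a, mul (inv a) gam)) (hfin (grng gam)))).
    move=> [a b] [[/= c e] nz]; exists a => /=.
      split; last by rewrite -e (rng_mul c).
      by apply/negP => /eqP fa; move: nz; rewrite /H /= fa mul0r eqxx.
    by rewrite -e mulK.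
  exists (\sum_(p <- fset_set D) H p), (fset_set D); split => //.
  - by apply/NoDupE; exact: fset_uniq.
  - by move=> p /InE; rewrite in_fset_set // => /set_mem [].
  - move=> a b c e nz; apply/InE; rewrite in_fset_set //; apply/mem_set.
    by split.
have := epsilon_spec (inhabits (0 : R)) _ ex.
rewrite /conv; case=> l [nd hin hcov ->].
by rewrite -(sum_list nd hin hcov).
Qed.
End ConvF.

End Stein.


Section Carrier.
Variable G : TopGroupoid.
Variable R : fieldType.
Variable P : set G.

Definition fsP (xi : G -> R) : Prop :=
  finite_set [set y | xi y != 0] /\ (forall y, xi y != 0 -> P y).

Record FS := MkFS { fsv :> G -> R ; fsvP : `[< fsP fsv >] }.
HB.instance Definition _ := [isSub for fsv].
HB.instance Definition _ := [Choice of FS by <:].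

Definition mkFS xi (h : fsP xi) : FS := MkFS (asboolT h).

Lemma fsPP (x : FS) : fsP x.
Proof. exact/asboolP/fsvP. Qed.

Lemma fs_eq (x y : FS) : (forall t, x t = y t) -> x = y.
Proof. by move=> h; apply: val_inj; apply/funext. Qed.

Lemma fsP0 : fsP (fun _ => 0).
Proof.
split; last by move=> y; rewrite eqxx.
apply: (@sub_finite_set _ _ set0); last exact: finite_set0.
by move=> y /=; rewrite eqxx.
Qed.

Lemma fsPD (x y : G -> R) : fsP x -> fsP y -> fsP (fun t => x t + y t).
Proof.
move=> [fx px] [fy py]; split.
  apply: (@sub_finite_set _ _ ([set y | x y != 0] `|` [set t | y t != 0])); last first.
    by rewrite finite_setU; split.
  move=> t /= nz.
  case: (eqVneq (x t) 0) => [e|]; last by left.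
  by right; move: nz; rewrite e add0r.
move=> t nz; case: (eqVneq (x t) 0) => [e|]; last exact: px.
by apply: py; move: nz; rewrite e add0r.
Qed.

Lemma fsPN (x : G -> R) : fsP x -> fsP (fun t => - x t).
Proof.
move=> [fx px]; split.
  apply: (sub_finite_set _ fx) => t /=; by rewrite oppr_eq0.
by move=> t; rewrite oppr_eq0; apply: px.
Qed.

Definition fs0 : FS := mkFS fsP0.
Definition fsadd (x y : FS) : FS := mkFS (fsPD (fsPP x) (fsPP y)).
Definition fsopp (x : FS) : FS := mkFS (fsPN (fsPP x)).

Lemma fsaddA : associative fsadd.
Proof. by move=> x y z; apply: fs_eq => t /=; rewrite addrA. Qed.
Lemma fsaddC : commutative fsadd.
Proof. by move=> x y; apply: fs_eq => t /=; rewrite addrC. Qed.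
Lemma fsadd0 : left_id fs0 fsadd.
Proof. by move=> x; apply: fs_eq => t /=; rewrite add0r. Qed.
Lemma fsaddN : left_inverse fs0 fsopp fsadd.
Proof. by move=> x; apply: fs_eq => t /=; rewrite addNr. Qed.

HB.instance Definition _ := GRing.isZmodule.Build FS fsaddA fsaddC fsadd0 fsaddN.

Lemma fsvD (x y : FS) t : (x + y) t = x t + y t.
Proof. by []. Qed.
Lemma fsv0 t : (0 : FS) t = 0.
Proof. by []. Qed.
Lemma fsvN (x : FS) t : (- x) t = - x t.
Proof. by []. Qed.
Lemma fsv_sum (I : Type) (l : seq I) (F : I -> FS) t :
  (\sum_(i <- l) F i) t = \sum_(i <- l) F i t.
Proof.
elim: l => [|i l IH]; first by rewrite !big_nil.
by rewrite !big_cons fsvD IH.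
Qed.

Lemma fsv_ins (xi : G -> R) : fsP xi -> (insubd (0 : FS) xi : G -> R) = xi.
Proof. by move=> h; rewrite insubdK //; apply/asboolP. Qed.

Definition sdel (c : R) (y : G) : G -> R := fun t => if t == y then c else 0.

Lemma fsP_sdel c y : P y -> fsP (sdel c y).
Proof.
move=> Py; split.
  apply: (sub_finite_set _ (finite_set1 y)) => t /=; rewrite /sdel; case: (eqVneq t y) => // _; by rewrite eqxx.
by move=> t; rewrite /sdel; case: (eqVneq t y) => [-> //|_]; rewrite eqxx.
Qed.

Lemma sum_sel (s : seq G) (F : G -> R) t : uniq s ->
  \sum_(y <- s) (if t == y then F y else 0) = if t \in s then F t else 0.
Proof.
elim: s => [|y s IH] /=; first by rewrite big_nil.
case/andP=> ys us; rewrite big_cons IH // in_cons.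
case: (eqVneq t y) => [->|] /=; last by rewrite add0r.
by rewrite (negPf ys) addr0.
Qed.

Lemma fs_decomp (x : FS) : exists s : seq G,
  [/\ forall y, y \in s -> P y /\ x y != 0, uniq s &
      forall t, x t = \sum_(y <- s) sdel (x y) y t].
Proof.
have [fx px] := fsPP x.
exists (fset_set [set y | x y != 0]); split.
- by move=> y; rewrite in_fset_set // => /set_mem nz; split => //; apply: px.
- exact: fset_uniq.
- move=> t; rewrite /sdel sum_sel ?fset_uniq // in_fset_set //.
  case: (boolP (t \in [set y | x y != 0])) => //.
  by rewrite (@mem_setE G) => /negP; case: (eqVneq (x t) 0).
Qed.

End Carrier.


Section Act.
Variable G : TopGroupoid.
Variable R : fieldType.
Variable P : set G.
Variable p : G -> G.
Variable a : G -> G -> G.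
Hypothesis hA3 : forall g y, P y -> gdom g = p y -> P (a g y) /\ p (a g y) = grng g.
Hypothesis hA4 : forall y, P y -> a (p y) y = y.
Hypothesis hA5 : forall g h y, P y -> gdom h = p y -> gdom g = grng h ->
  a (gmul g h) y = a g (a h y).

Local Notation mul := (@gmul G).
Local Notation inv := (@ginv G).

Definition actR (f xi : G -> R) : G -> R := fun y =>
  if `[< P y >] then \sum_(g \in [set g | grng g = p y]) f g * xi (a (inv g) y) else 0.

Lemma ainv_P g y : P y -> grng g = p y -> P (a (inv g) y) /\ p (a (inv g) y) = gdom g.
Proof. by move=> Py e; rewrite -rng_inv; apply: hA3; rewrite ?dom_inv. Qed.

Lemma a_back g y : P y -> grng g = p y -> a g (a (inv g) y) = y.
Proof.
move=> Py e; rewrite -hA5 ?mulxV ?e ?hA4 //; by rewrite ?dom_inv ?rng_inv.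
Qed.

Lemma actR_fsP f xi : FF2 f -> fsP P xi -> fsP P (actR f xi).
Proof.
move=> [ff1 ff2] [fx px]; split; last first.
  by move=> y; rewrite /actR; case: (pselect (P y)) => // nP; rewrite asboolF ?eqxx.
apply: (@sub_finite_set _ _ (\bigcup_(x in [set x | xi x != 0])
     [set a al x | al in [set al | f al != 0 /\ gdom al = p x]])); last first.
  by apply: bigcup_finite => // x _; apply: finite_image.
move=> y /=; rewrite /actR; case: (pselect (P y)) => [Py|nP]; last by rewrite asboolF ?eqxx.
rewrite asboolT // => /fsum_neq0 [al [/= e]]; rewrite mulf_eq0 negb_or => /andP [fa xa].
have [Px px'] := ainv_P Py e.
exists (a (inv al) y) => //; exists al; first by split.
exact: a_back.
Qed.

Lemma actR_addf f g xi : FF2 f -> FF2 g ->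
  actR (fadd f g) xi = fun y => actR f xi y + actR g xi y.
Proof.
move=> [ff1 _] [fg1 _]; apply/funext => y; rewrite /actR.
case: (pselect (P y)) => [Py|nP]; last by rewrite !asboolF ?addr0.
rewrite !asboolT //.
rewrite (eq_fsbigr (fun g0 => f g0 * xi (a (inv g0) y) + g g0 * xi (a (inv g0) y))); last first.
  by move=> g0 _; rewrite /fadd mulrDl.
apply: (@fsum_split _ _ _ ([set g0 | f g0 != 0 /\ grng g0 = p y] `|` [set g0 | g g0 != 0 /\ grng g0 = p y])).
- by rewrite finite_setU; split.
- move=> g0 /= e; rewrite mulf_eq0 negb_or => /andP [? _]; by left.
- move=> g0 /= e; rewrite mulf_eq0 negb_or => /andP [? _]; by right.
Qed.

Lemma actR_addr f xi xi' : FF2 f ->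
  actR f (fun t => xi t + xi' t) = fun y => actR f xi y + actR f xi' y.
Proof.
move=> [ff1 _]; apply/funext => y; rewrite /actR.
case: (pselect (P y)) => [Py|nP]; last by rewrite !asboolF ?addr0.
rewrite !asboolT //.
rewrite (eq_fsbigr (fun g0 => f g0 * xi (a (inv g0) y) + f g0 * xi' (a (inv g0) y))); last first.
  by move=> g0 _; rewrite mulrDr.
apply: (@fsum_split _ _ _ [set g0 | f g0 != 0 /\ grng g0 = p y]) => //.
- move=> g0 /= e; rewrite mulf_eq0 negb_or => /andP [? _]; by [].
- move=> g0 /= e; rewrite mulf_eq0 negb_or => /andP [? _]; by [].
Qed.

Lemma actR_conv f g xi : FF2 f -> FF2 g ->
  actR (conv f g) xi = actR f (actR g xi).
Proof.
move=> [ff1 ff2] [fg1 fg2]; apply/funext => y; rewrite {1 2}/actR.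
case: (pselect (P y)) => [Py|nP]; last by rewrite !asboolF.
rewrite !asboolT //.
pose Ky := [set k | grng k = p y].
rewrite (eq_fsbigr (fun k => \sum_(al \in Ky) f al * g (mul (inv al) k) * xi (a (inv k) y))); last first.
  move=> k /set_mem /= e; rewrite (conv_formula _ _ ff1) mulr_fsuml.
  by rewrite e.
rewrite (fsum_exchange (A := \bigcup_(al in [set al | f al != 0 /\ grng al = p y])
     [set mul al be | be in [set be | g be != 0 /\ grng be = gdom al]])
   (B := [set al | f al != 0 /\ grng al = p y])); last first.
- move=> k al /= ek eal; rewrite !mulf_eq0 !negb_or => /andP [/andP [fa ga] _].
  split => //; exists al => //.
  exists (mul (inv al) k); last by rewrite mulKV' // ek eal.
  split => //; rewrite rng_mul ?rng_inv //.
  by apply/compE; rewrite dom_inv eal ek.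
- exact: ff1.
- by apply: bigcup_finite => // al _; apply: finite_image.
apply: eq_fsbigr => al /set_mem /= eal.
have [Pz pz] := ainv_P Py eal.
rewrite /actR asboolT // mulr_fsumr pz.
rewrite (fsum_reindex (P := [set be | grng be = gdom al]) (Q := Ky) (h := fun be => mul al be)).
- apply: eq_fsbigr => be /set_mem /= ebe.
  have cab : gcomp al be by apply/compE.
  rewrite mulK // inv_mul // hA5 ?mulrA //.
  + by rewrite dom_inv.
  + by rewrite dom_inv rng_inv.
- by move=> be /= ebe; rewrite /Ky /= rng_mul // ; apply/compE.
- by move=> be be' /= e1 e2; apply: mul_cancel; apply/compE.
- move=> k /= ek; exists (mul (inv al) k); split; last by rewrite mulKV' // ek.
  by rewrite /= rng_mul ?rng_inv //; apply/compE; rewrite dom_inv eal.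
Qed.

Definition act (f : G -> R) (x : FS R P) : FS R P := insubd (0 : FS R P) (actR f x).

Lemma actE f x : FF2 f -> (act f x : G -> R) = actR f x.
Proof. by move=> h; rewrite /act fsv_ins //; apply: actR_fsP => //; exact: fsPP. Qed.

End Act.


Section Mod.
Variable G : TopGroupoid.
Variable R : fieldType.
Variable P : set G.
Variable p : G -> G.
Variable a : G -> G -> G.
Hypothesis hA3 : forall g y, P y -> gdom g = p y -> P (a g y) /\ p (a g y) = grng g.
Hypothesis hA4 : forall y, P y -> a (p y) y = y.
Hypothesis hA5 : forall g h y, P y -> gdom h = p y -> gdom g = grng h ->
  a (gmul g h) y = a g (a h y).
Hypothesis Hample : ample G.

Local Notation mul := (@gmul G).
Local Notation inv := (@ginv G).
Local Notation M := (FS R P).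
Local Notation actM := (@act G R P p a).
Local Notation actE := (actE hA3 hA4 hA5).

Lemma actD f (x y : M) : FF2 f -> actM f (x + y) = actM f x + actM f y.
Proof.
move=> hf; apply: fs_eq => t; rewrite fsvD !actE //.
by rewrite (_ : fsv (x + y) = fun t => x t + y t) // actR_addr.
Qed.

Lemma act0 f : FF2 f -> actM f 0 = 0.
Proof.
move=> hf; have := actD (0 : M) 0 hf; rewrite addr0 => e.
by apply: (addrI (actM f 0)); rewrite addr0 -e.
Qed.

Lemma act_opp f (x : M) : FF2 f -> actM f (- x) = - actM f x.
Proof.
move=> hf; apply/eqP; rewrite -addr_eq0 -actD // addNr act0 //.
Qed.

Lemma act_sum f (I : Type) (l : seq I) (F : I -> M) : FF2 f ->
  actM f (\sum_(i <- l) F i) = \sum_(i <- l) actM f (F i).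
Proof.
move=> hf; elim: l => [|i l IH]; first by rewrite !big_nil act0.
by rewrite !big_cons actD // IH.
Qed.

Lemma FF2_add (f g : G -> R) : FF2 f -> FF2 g -> FF2 (fadd f g).
Proof.
case=> [f1 f2] [g1 g2]; split=> v.
- apply: (@sub_finite_set _ _ ([set h | f h != 0 /\ grng h = v] `|` [set h | g h != 0 /\ grng h = v])); last by rewrite finite_setU.
  move=> h [nz e]; case: (eqVneq (f h) 0) => [e0|]; last by left.
  by right; split=> //; move: nz; rewrite /fadd e0 add0r.
- apply: (@sub_finite_set _ _ ([set h | f h != 0 /\ gdom h = v] `|` [set h | g h != 0 /\ gdom h = v])); last by rewrite finite_setU.
  move=> h [nz e]; case: (eqVneq (f h) 0) => [e0|]; last by left.
  by right; split=> //; move: nz; rewrite /fadd e0 add0r.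
Qed.

Lemma actDf f g (x : M) : FF2 f -> FF2 g -> actM (fadd f g) x = actM f x + actM g x.
Proof.
move=> hf hg; apply: fs_eq => t; rewrite fsvD !actE //; last exact: FF2_add.
by rewrite actR_addf.
Qed.

Lemma act_conv f g (x : M) : FF2 f -> FF2 g -> actM (conv f g) x = actM f (actM g x).
Proof.
move=> hf hg; apply: fs_eq => t; rewrite [in RHS]actE //.
have -> : (actM g x : G -> R) = actR P p a g x by rewrite actE.
rewrite /act -actR_conv // fsv_ins //.
by rewrite actR_conv //; apply: actR_fsP => //; apply: actR_fsP => //; exact: fsPP.
Qed.

Lemma act_left_module : left_module actM.
Proof.
split.
- by move=> f g x /(stein_FF2 Hample) hf /(stein_FF2 Hample) hg; apply: actDf.
- by move=> f x y /(stein_FF2 Hample) hf; apply: actD.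
- by move=> f g x /(stein_FF2 Hample) hf /(stein_FF2 Hample) hg; apply: act_conv.
Qed.

Definition ract (x : M) (f : G -> R) : M := actM (fun g => f (inv g)) x.

Lemma conv_inv (f g : G -> R) : FF2 f -> FF2 g ->
  (fun y => conv f g (inv y)) = conv (fun y => g (inv y)) (fun y => f (inv y)).
Proof.
move=> hf hg; apply/funext => gam.
rewrite (conv_formula _ _ hf.1) (conv_formula _ _ (FF2_inv hg).1) rng_inv.
rewrite (fsum_reindex (P := [set al | grng al = gdom gam]) (Q := [set b | grng b = grng gam]) (h := fun al => mul gam al)).
- apply: eq_fsbigr => al /set_mem /= e.
  have c1 : gcomp gam al by apply/compE.
  have h1 : gcomp (inv al) (inv gam) by apply/compE; rewrite dom_inv rng_inv.
  have h2 : gcomp (inv gam) gam := gcompVx gam.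
  rewrite (inv_mul c1) (mulA h1 h2) mulVx -e -(dom_inv al) mul_dom ginvK mulrC.
  by [].
- by move=> al /= e; rewrite rng_mul //; apply/compE.
- by move=> al al' /= e1 e2; apply: mul_cancel; apply/compE.
- move=> b /= e; exists (mul (inv gam) b); split; last by rewrite mulKV'.
  by rewrite /= rng_mul ?rng_inv //; apply/compE; rewrite dom_inv.
Qed.

Lemma act_right_module : right_module ract.
Proof.
split.
- move=> f g x /(stein_FF2 Hample)/FF2_inv hf /(stein_FF2 Hample)/FF2_inv hg.
  exact: actDf.
- by move=> f x y /(stein_FF2 Hample)/FF2_inv hf; apply: actD.
- move=> f g x /(stein_FF2 Hample) hf /(stein_FF2 Hample) hg.
  rewrite /ract (conv_inv hf hg) act_conv //; exact: FF2_inv.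
Qed.

Lemma ract0 f (x : M) : in_steinberg f -> ract 0 f = 0.
Proof. by move/(stein_FF2 Hample)/FF2_inv => h; apply: act0. Qed.

Lemma ractD f (x y : M) : in_steinberg f -> ract (x + y) f = ract x f + ract y f.
Proof. by move/(stein_FF2 Hample)/FF2_inv => h; apply: actD. Qed.

Lemma ractN f (x : M) : in_steinberg f -> ract (- x) f = - ract x f.
Proof. by move/(stein_FF2 Hample)/FF2_inv => h; apply: act_opp. Qed.

End Mod.


Section Main.
Variable G : TopGroupoid.
Variable R : fieldType.
Hypothesis Hample : ample G.
Hypothesis Hhaus : hausdorff G.
Variable u : G.
Hypothesis hu : unit_space u.

Local Notation mul := (@gmul G).
Local Notation inv := (@ginv G).

Definition PN : set G := [set w | exists k, gdom k = u /\ grng k = w].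
Definition pN : G -> G := fun y => y.
Definition aN : G -> G -> G := fun g _ => grng g.

Lemma hN3 g y : PN y -> gdom g = pN y -> PN (aN g y) /\ pN (aN g y) = grng g.
Proof.
move=> [k [dk rk]] e; split => //; exists (mul g k).
have cgk : gcomp g k by apply/compE; rewrite e rk.
by rewrite dom_mul // rng_mul.
Qed.

Lemma hN4 y : PN y -> aN (pN y) y = y.
Proof. by move=> [k [_ <-]]; rewrite /aN /pN rng_rng. Qed.

Lemma hN5 g h y : PN y -> gdom h = pN y -> gdom g = grng h ->
  aN (mul g h) y = aN g (aN h y).
Proof. by move=> _ _ e; rewrite /aN rng_mul //; apply/compE. Qed.

Definition PM : set G := [set h | gdom h = u].

Lemma hM3 g y : PM y -> gdom g = grng y -> PM (mul g y) /\ grng (mul g y) = grng g.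
Proof.
move=> dy e; have c : gcomp g y by apply/compE.
by split; [rewrite /PM /= dom_mul|rewrite rng_mul].
Qed.

Lemma hM4 y : PM y -> mul (grng y) y = y.
Proof. by move=> _; rewrite mul_rng. Qed.

Lemma hM5 g h y : PM y -> gdom h = grng y -> gdom g = grng h ->
  mul (mul g h) y = mul g (mul h y).
Proof. by move=> _ e1 e2; apply: mulA; apply/compE. Qed.

Local Notation N := (FS R PN).
Local Notation M := (FS R PM).
Definition actN := @act G R PN pN aN.
Definition ractM := @ract G R PM (@grng G) (@gmul G).

Local Notation actNE := (actE hN3 hN4 hN5).

Lemma sind_FF2 (c' : R) (B : G -> Prop) : obis B -> FF2 (sind c' B).
Proof. by move=> oB; apply: (stein_FF2 Hample); apply: sind_stein. Qed.

Lemma actN_loc (xi : N) c' B g : obis B -> B g ->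
  (forall al, B al -> xi (gdom al) != 0 -> al = g) ->
  (actN (sind c' B) xi : G -> R) = sdel (c' * xi (gdom g)) (grng g).
Proof.
move=> oB Bg hB; rewrite /actN actNE; last exact: sind_FF2.
apply/funext => w; rewrite /actR /sdel.
case: (pselect (PN w)) => [Pw|nP]; last first.
  rewrite asboolF //; case: (eqVneq w (grng g)) => // e.
  case: (eqVneq (xi (gdom g)) 0) => [->|nz]; first by rewrite mulr0.
  exfalso; apply: nP; rewrite e.
  have Pd : PN (gdom g) := (fsPP xi).2 _ nz.
  by have [] := hN3 Pd (erefl _).
rewrite asboolT //; case: (eqVneq w (grng g)) => [->|ne].
  rewrite (fsum_single (x0 := g)) //.
    by rewrite /sind asboolT // /aN rng_inv.
  move=> al /= e neq; rewrite /sind /aN rng_inv.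
  case: (pselect (B al)) => Bal; last by rewrite asboolF ?mul0r.
  case: (eqVneq (xi (gdom al)) 0) => [->|nz]; first by rewrite mulr0.
  by exfalso; apply: neq; apply: hB.
apply: fsum0 => al /= e; rewrite /sind /aN rng_inv.
case: (pselect (B al)) => Bal; last by rewrite asboolF ?mul0r.
case: (eqVneq (xi (gdom al)) 0) => [->|nz]; first by rewrite mulr0.
have e' : grng al = w := e.
by exfalso; move/eqP: ne; apply; rewrite -e' (hB al Bal nz).
Qed.


Lemma PN_unit y : PN y -> unit_space y.
Proof. by move=> [k [_ <-]]; apply: unit_rng_is. Qed.

Definition delN (c' : R) (y : G) : N := insubd (0 : N) (sdel c' y).

Lemma delNE c' y : PN y -> (delN c' y : G -> R) = sdel c' y.
Proof. by move=> Py; rewrite /delN fsv_ins //; apply: fsP_sdel. Qed.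

Lemma obis_all : forall y : G, exists B, obis B /\ B y.
Proof.
move=> y; have [B [oB By _]] := @bis_at G Hample (fun _ => True) y (topen_full G) I.
by exists B.
Qed.

Lemma actN_del (c' : R) B y : obis B -> B y -> PN y ->
  actN (sind 1 B) (delN c' y) = delN c' y.
Proof.
move=> oB By Py; apply: fs_eq => t.
have uy := PN_unit Py.
have hc : forall al, B al -> (delN c' y) (gdom al) != 0 -> al = y.
  move=> al Bal; rewrite delNE // /sdel; case: (eqVneq (gdom al) y) => [e _|_]; last by rewrite eqxx.
  by apply: (obis_dinj oB) => //; rewrite e unit_dom.
rewrite (@actN_loc _ 1 B y oB By hc).
by rewrite delNE // mul1r (unit_dom uy) (unit_rng uy) [sdel c' y y]/sdel eqxx.
Qed.

Lemma sum_delN (I : Type) (l : seq I) (F : I -> N) t :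
  (\sum_(i <- l) F i) t = \sum_(i <- l) F i t.
Proof. exact: fsv_sum. Qed.

Lemma N_decomp (n : N) : exists s : seq G, (forall y, y \in s -> PN y) /\
  n = \sum_(y <- s) delN (n y) y.
Proof.
have [s [h1 us h3]] := fs_decomp n.
exists s; split; first by move=> y /h1 [].
apply: fs_eq => t; rewrite h3 fsv_sum.
apply: eq_big_seq => y ys; rewrite delNE //; exact: (h1 y ys).1.
Qed.

Lemma N_unital : left_unital actN.
Proof.
move=> n; have [Bf hBf] := choice obis_all.
have [s [hs ->]] := N_decomp n.
exists (map (fun y => (sind 1 (Bf y), delN (n y) y)) s); split.
  move=> q /InE /mapP [y ys ->] /=; apply: sind_stein => //; exact: (hBf y).1.
rewrite big_map; apply: eq_big_seq => y ys /=.
by rewrite actN_del //; [exact: (hBf y).1|exact: (hBf y).2|exact: hs].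
Qed.

Lemma N_left_module : left_module actN.
Proof. exact: (act_left_module R hN3 hN4 hN5 Hample). Qed.

Lemma Pu : PN u.
Proof. by exists u; rewrite unit_dom // unit_rng. Qed.

Lemma delN_neq0 : delN 1 u != 0.
Proof.
apply/eqP => e.
have e1 : (delN 1 u : G -> R) u = (0 : N) u by rewrite e.
rewrite (delNE _ Pu) /sdel (eqxx u) in e1.
have e2 : (1 : R) = 0 := e1.
by move: (oner_neq0 R); rewrite e2 eqxx.
Qed.

Lemma separate (xi : N) w0 : exists V, [/\ topen V, V w0 &
  forall z, V z -> xi z != 0 -> z = w0].
Proof.
have hs : forall y, exists UV : (G -> Prop) * (G -> Prop), y <> w0 ->
   [/\ topen UV.1, topen UV.2, UV.1 w0, UV.2 y & forall z, ~ (UV.1 z /\ UV.2 z)].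
  move=> y; case: (pselect (y = w0)) => [e|ne].
    by exists ((fun _ => True), (fun _ => True)).
  have [U [V [? ? ? ? ?]]] := Hhaus (nesym ne).
  by exists (U, V).
have [UV hUV] := choice hs.
have [fx _] := fsPP xi.
pose s := fset_set [set y | xi y != 0].
pose F y := fun z => if `[< y <> w0 >] then (UV y).1 z else True.
exists (fun z => forall y, In y s -> F y z); split.
- apply: op_inter_list => y; rewrite /F; case: (pselect (y = w0)) => [e|ne].
    apply: (fun h => op_ext h (topen_full G)) => z; rewrite asboolF //.
  case: (hUV y ne) => oU _ _ _ _.
  apply: (fun h => op_ext h oU) => z; rewrite asboolT //.
- move=> y _; rewrite /F; case: (pselect (y = w0)) => [e|ne].
    by rewrite asboolF.
  by rewrite asboolT //; case: (hUV y ne).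
- move=> z Vz nz; apply: contrapT => ne.
  have zs : In z s by apply/InE; rewrite in_fset_set //; apply/mem_set.
  have := Vz z zs; rewrite /F asboolT // => h1.
  by case: (hUV z ne) => _ _ _ h2 /(_ z); apply.
Qed.

Lemma N_simple : simple_left actN.
Proof.
split; first by exists (delN 1 u); apply/eqP; exact: delN_neq0.
move=> S [S0 SD SN Sact].
case: (pselect (exists xi, S xi /\ xi <> 0)) => [[xi [Sxi nz]]|h]; last first.
  left=> n Sn; apply: contrapT => nn; apply: h; by exists n.
right.
have [w0 nzw0] : exists w0, xi w0 != 0.
  apply: contrapT => h; apply: nz; apply: fs_eq => t; rewrite fsv0.
  by case: (eqVneq (xi t) 0) => // nt; exfalso; apply: h; exists t.
have Pw0 : PN w0 := (fsPP xi).2 _ nzw0.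
have Sdel : forall c' w, PN w -> S (delN c' w).
  move=> c' w [k [dk rk]]; case: Pw0 => k0 [dk0 rk0].
  pose g := mul k (inv k0).
  have ckk : gcomp k (inv k0) by apply/compE; rewrite rng_inv dk dk0.
  have dg : gdom g = w0 by rewrite /g dom_mul // dom_inv.
  have rg : grng g = w by rewrite /g rng_mul.
  have [V [oV Vw0 hV]] := separate xi w0.
  have [B0 [oB0 B0g]] := obis_all g.
  have oW : topen (fun al => B0 al /\ V (gdom al)) := obis_dcont oB0 oV.
  have [B [oB Bg BW]] := bis_at Hample oW (conj B0g (eq_ind_r V Vw0 dg)).
  have hc : forall al, B al -> xi (gdom al) != 0 -> al = g.
    move=> al Bal nzal; apply: (obis_dinj oB) => //.
    by rewrite dg; apply: hV => //; case: (BW al Bal).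
  have -> : delN c' w = actN (sind ((xi w0)^-1 * c') B) xi.
    apply: fs_eq => t; rewrite (@actN_loc _ _ B g oB Bg hc).
    rewrite dg rg delNE; last by exists k.
    by rewrite mulrAC mulVf // mul1r.
  by apply: Sact => //; apply: sind_stein.
move=> n; have [s [hs ->]] := N_decomp n.
elim: s hs => [|y s IH] hs; first by rewrite big_nil.
rewrite big_cons; apply: SD; first by apply: Sdel; apply: hs; rewrite in_cons eqxx.
by apply: IH => z zs; apply: hs; rewrite in_cons zs orbT.
Qed.

End Main.


Section MSide.
Variable G : TopGroupoid.
Variable R : fieldType.
Hypothesis Hample : ample G.
Hypothesis Hhaus : hausdorff G.
Variable u : G.
Hypothesis hu : unit_space u.

Local Notation mul := (@gmul G).
Local Notation inv := (@ginv G).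
Local Notation PM := (PM u).
Local Notation M := (FS R PM).
Local Notation ractM := (@ractM G R u).
Local Notation actME := (actE (@hM3 G u) (@hM4 G u) (@hM5 G u)).

Definition delM (c' : R) (y : G) : M := insubd (0 : M) (sdel c' y).

Lemma delME c' y : gdom y = u -> (delM c' y : G -> R) = sdel c' y.
Proof. by move=> Py; rewrite /delM fsv_ins //; apply: fsP_sdel. Qed.

Lemma ractM_del (c' : R) k f : gdom k = u -> in_steinberg f ->
  (ractM (delM c' k) f : G -> R) =
  fun h => if `[< gdom h = u >] then f (mul k (inv h)) * c' else 0.
Proof.
move=> dk sf; rewrite /ractM /ract actME; last exact/FF2_inv/(stein_FF2 Hample).
apply/funext => h; rewrite /actR delME //.
case: (pselect (gdom h = u)) => [dh|ndh]; last by rewrite !asboolF.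
rewrite !asboolT //.
have chk : gcomp h (inv k) by apply/compE; rewrite rng_inv dh dk.
rewrite (fsum_single (x0 := mul h (inv k))) /=.
- rewrite (inv_mul chk) ginvK /sdel.
  have ckh : gcomp k (inv h) by apply/compE; rewrite rng_inv dh dk.
  have chh : gcomp (inv h) h := gcompVx h.
  rewrite (mulA ckh chh) mulVx dh -dk mul_dom eqxx.
  by [].
- by rewrite rng_mul.
- move=> g /= e ne; rewrite /sdel; case: (eqVneq (mul (inv g) h) k) => [ek|]; last by rewrite mulr0.
  exfalso; apply: ne.
  have cgh : gcomp (inv g) h by apply/compE; rewrite dom_inv.
  have egk : mul g k = h by rewrite -ek mulKV'.
  have cgk : gcomp g k by apply/compE; rewrite -ek rng_mul // rng_inv.
  by rewrite -egk mulKr.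
Qed.


Lemma M_right_module : right_module ractM.
Proof. exact: (act_right_module R (@hM3 G u) (@hM4 G u) (@hM5 G u) Hample). Qed.

Lemma M_decomp (m : M) : exists s : seq G, (forall y, y \in s -> gdom y = u) /\
  m = \sum_(y <- s) delM (m y) y.
Proof.
have [s [h1 us h3]] := fs_decomp m.
exists s; split; first by move=> y /h1 [].
apply: fs_eq => t; rewrite h3 fsv_sum.
apply: eq_big_seq => y ys; rewrite delME //; exact: (h1 y ys).1.
Qed.

Lemma ractM_del_unit (c' : R) y B : gdom y = u -> obis B -> B (grng y) ->
  ractM (delM c' y) (sind 1 B) = delM c' y.
Proof.
move=> dy oB By; apply: fs_eq => h.
rewrite ractM_del //; last exact: sind_stein.
rewrite delME // /sdel /sind.
case: (pselect (gdom h = u)) => [dh|ndh]; last first.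
  rewrite asboolF //; case: (eqVneq h y) => // e; by exfalso; apply: ndh; rewrite e.
rewrite asboolT //.
have cyh : gcomp y (inv h) by apply/compE; rewrite rng_inv dh dy.
case: (eqVneq h y) => [->|ne].
  by rewrite mulxV asboolT // mul1r.
case: (pselect (B (mul y (inv h)))) => Bh; last by rewrite asboolF ?mul0r.
exfalso; move/eqP: ne; apply.
have e : mul y (inv h) = grng y.
  apply: (obis_rinj oB) => //; by rewrite rng_mul // rng_rng.
have e2 : inv h = inv y.
  have := mulK cyh; rewrite e => <-.
  by rewrite -(dom_inv y) mul_dom.
by rewrite -(ginvK h) e2 ginvK.
Qed.

Lemma M_unital : right_unital ractM.
Proof.
move=> m; have [Bf hBf] := choice (obis_all Hample).
have [s [hs ->]] := M_decomp m.
exists (map (fun y => (delM (m y) y, sind 1 (Bf (grng y)))) s); split.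
  move=> q /InE /mapP [y ys ->] /=; apply: sind_stein => //; exact: (hBf _).1.
rewrite big_map; apply: eq_big_seq => y ys /=.
by rewrite ractM_del_unit //; [exact: hs|exact: (hBf _).1|exact: (hBf _).2].
Qed.

Variable x : G.
Hypothesis hxd : gdom x = u.
Hypothesis hxr : grng x = u.

Definition rhoR (m : G -> R) : G -> R :=
  fun h => if `[< gdom h = u >] then m (mul h (inv x)) else 0.

Lemma rhoR_fsP (m : M) : fsP PM (rhoR m).
Proof.
have [fm pm] := fsPP m; split; last first.
  by move=> h; rewrite /rhoR; case: (pselect (gdom h = u)) => [//|n]; rewrite asboolF ?eqxx.
apply: (sub_finite_set _ (finite_image (fun k => mul k x) fm)) => h /=.
rewrite /rhoR; case: (pselect (gdom h = u)) => [dh|n]; last by rewrite asboolF ?eqxx.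
rewrite asboolT // => nz; exists (mul h (inv x)) => //.
have chx : gcomp h (inv x) by apply/compE; rewrite rng_inv dh hxd.
by have := mulKr chx; rewrite ginvK.
Qed.

Definition rho (m : M) : M := mkFS (rhoR_fsP m).
Definition psi (m : M) : M := rho m - m.

Lemma rhoD (m m' : M) : rho (m + m') = rho m + rho m'.
Proof.
apply: fs_eq => h; rewrite fsvD /= /rhoR.
by case: (pselect (gdom h = u)) => [dh|n]; [rewrite !asboolT|rewrite !asboolF ?addr0].
Qed.

Lemma rho_ract (m : M) f : in_steinberg f -> rho (ractM m f) = ractM (rho m) f.
Proof.
move=> sf; have hf : FF2 (fun g => f (inv g)) by apply/FF2_inv/(stein_FF2 Hample).
apply: fs_eq => h; rewrite /= /rhoR /ractM /ract !actME //.
rewrite /actR.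
case: (pselect (gdom h = u)) => [dh|n]; last by rewrite !asboolF.
have chx : gcomp h (inv x) by apply/compE; rewrite rng_inv dh hxd.
have P1 : PM (mul h (inv x)) by rewrite /PM /= dom_mul // dom_inv.
rewrite !asboolT // (rng_mul chx).
apply: eq_fsbigr => g /set_mem /= e.
have cgh : gcomp (inv g) h by apply/compE; rewrite dom_inv.
rewrite /= /rhoR asboolT; last by rewrite dom_mul.
by rewrite (mulA cgh chx).
Qed.

Lemma psi_linear : right_linear ractM ractM psi.
Proof.
split.
  by move=> m m'; rewrite /psi rhoD opprD addrACA.
move=> m f sf; rewrite /psi rho_ract //.
rewrite [RHS](ractD (@hM3 G u) (@hM4 G u) (@hM5 G u) Hample) //.
by rewrite (ractN (@hM3 G u) (@hM4 G u) (@hM5 G u) Hample).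
Qed.

End MSide.


Section OG.
Variable Gam : OrderedGroup.
Local Notation "a ** b" := (ogmul a b) (at level 40).
Local Notation e := (ogone Gam).

Lemma og_cancel (a b b' : Gam) : a ** b = a ** b' -> b = b'.
Proof.
move=> h; have := congr1 (ogmul (oginv a)) h.
by rewrite -!ogmulA ogmulVg !ogmul1g.
Qed.

Lemma og_idem (a : Gam) : a = a ** a -> a = e.
Proof. by move=> h; apply: (@og_cancel a); rewrite ogmulg1 -h. Qed.

Lemma mono_inj (T : Type) (le : T -> T -> Prop) (s : nat -> T) :
  (forall a, le a a) -> (forall a b, le a b -> le b a -> a = b) ->
  (forall a b c, le a b -> le b c -> le a c) ->
  (forall n, le (s n) (s n.+1)) -> (forall n, s n <> s n.+1) -> injective s.
Proof.
move=> refl anti trans hle hne.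
have hk : forall n k, le (s n) (s (n + k)%N).
  move=> n; elim=> [|k IH]; first by rewrite addn0.
  by rewrite addnS; apply: trans IH (hle _).
have lt : forall n m, (n < m)%N -> s n <> s m.
  move=> n m nm e1; apply: (hne n); apply: anti; first exact: hle.
  rewrite e1 -(subnKC nm); exact: hk.
move=> n m e1; case: (ltngtP n m) => // h; first by case: (lt _ _ h).
by case: (lt _ _ h).
Qed.

Lemma og_pow_inj (d : Gam) (s : nat -> Gam) : d <> e ->
  (forall n, s n.+1 = s n ** d) -> injective s.
Proof.
move=> nd hs.
have hne : forall n, s n <> s n.+1.
  move=> n; rewrite hs => h; apply: nd; apply: (@og_cancel (s n)).
  by rewrite ogmulg1.
case: (ogle_total e d) => hd.
- apply: (@mono_inj _ (@ogle Gam)) => //.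
  + exact: ogle_refl.
  + exact: ogle_anti.
  + exact: ogle_trans.
  + by move=> n; rewrite hs -{1}(ogmulg1 (s n)); apply: ogle_mull.
- apply: (@mono_inj _ (fun a b => ogle b a)) => //.
  + exact: ogle_refl.
  + by move=> a b h1 h2; apply: ogle_anti.
  + by move=> a b c h1 h2; apply: ogle_trans h2 h1.
  + by move=> n; rewrite hs -{2}(ogmulg1 (s n)); apply: ogle_mull.
Qed.

End OG.


Lemma no_inj_finite (T : eqType) (S : set T) (f : nat -> T) :
  finite_set S -> injective f -> (forall n, S (f n)) -> False.
Proof.
move=> /finite_seqP [l e] fi hS.
have sub : {subset map f (iota 0 (size l).+1) <= l}.
  by move=> y /mapP [n _ ->]; have := hS n; rewrite e.
have u1 : uniq (map f (iota 0 (size l).+1)) by rewrite (map_inj_uniq fi) iota_uniq.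
have := uniq_leq_size u1 sub.
by rewrite size_map size_iota ltnn.
Qed.

Section Inj.
Variable Gam : OrderedGroup.
Variable G : TopGroupoid.
Variable R : fieldType.
Variable c : G -> Gam.
Hypothesis Hgrad : grading c.
Hypothesis Hample : ample G.
Variable u : G.
Hypothesis hu : unit_space u.
Variable x : G.
Hypothesis hxd : gdom x = u.
Hypothesis hxr : grng x = u.
Hypothesis hcx : c x <> ogone Gam.

Local Notation mul := (@gmul G).
Local Notation inv := (@ginv G).
Local Notation M := (FS R (PM u)).

Lemma c_dom y : c (gdom y) = ogone Gam.
Proof.
apply: og_idem; rewrite -Hgrad.2; last by apply/compE; rewrite dom_dom rng_dom.
by rewrite -{1}(mul_dom (gdom y)) dom_dom.
Qed.

Lemma c_inv_neq : c (inv x) <> ogone Gam.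
Proof.
move=> h; apply: hcx.
have := c_dom x; rewrite /gdom Hgrad.2 ?h ?ogmul1g //; exact: gcompVx.
Qed.

Lemma psi_inj (m : M) : psi hxd m = 0 -> m = 0.
Proof.
move=> /eqP; rewrite subr_eq0 => /eqP hrm.
apply: contrapT => nz.
have [h0 nh0] : exists h0, m h0 != 0.
  apply: contrapT => h; apply: nz; apply: fs_eq => t; rewrite fsv0.
  by case: (eqVneq (m t) 0) => // nt; exfalso; apply: h; exists t.
have [fm pm] := fsPP m.
pose hs n := iter n (fun h => mul h (inv x)) h0.
have hsS : forall n, hs n.+1 = mul (hs n) (inv x) by [].
have inv1 : forall n, gdom (hs n) = u /\ m (hs n) = m h0.
  elim=> [|n [dn mn]]; first by split=> //; exact: pm.
  have chx : gcomp (hs n) (inv x) by apply/compE; rewrite rng_inv dn hxd.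
  split; first by rewrite hsS dom_mul // dom_inv.
  rewrite hsS -mn; have := congr1 (fun z : M => fsv z (hs n)) hrm.
  by rewrite /= /rhoR asboolT.
have hinj : injective hs.
  have : injective (fun n => c (hs n)).
    apply: (og_pow_inj (d := c (inv x))); first exact: c_inv_neq.
    move=> n; rewrite hsS Hgrad.2 //.
    by apply/compE; rewrite rng_inv (inv1 n).1 hxd.
  by move=> fi n n' e; apply: fi; rewrite /= e.
apply: (no_inj_finite fm hinj) => n /=.
by rewrite (inv1 n).2.
Qed.

End Inj.


Section Fin.
Variable G : TopGroupoid.
Variable R : fieldType.
Hypothesis Hample : ample G.
Hypothesis Hhaus : hausdorff G.
Variable u : G.
Hypothesis hu : unit_space u.

Local Notation mul := (@gmul G).
Local Notation inv := (@ginv G).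
Local Notation M := (FS R (PM u)).
Local Notation N := (FS R (PN u)).
Local Notation actNE := (actE (@hN3 G u) (@hN4 G u) (@hN5 G u)).

Definition beta (m : M) (n : N) : R := \sum_(h \in PM u) m h * n (grng h).

Lemma betaDl (m m' : M) n : beta (m + m') n = beta m n + beta m' n.
Proof.
rewrite /beta -(@fsum_split _ _ _ ([set h | m h != 0] `|` [set h | m' h != 0])).
- by apply: eq_fsbigr => h _; rewrite fsvD mulrDl.
- by rewrite finite_setU; split; [exact: (fsPP m).1|exact: (fsPP m').1].
- by move=> h _; rewrite mulf_eq0 negb_or => /andP [nz _]; left.
- by move=> h _; rewrite mulf_eq0 negb_or => /andP [nz _]; right.
Qed.

Lemma betaDr (m : M) n n' : beta m (n + n') = beta m n + beta m n'.
Proof.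
rewrite /beta -(@fsum_split _ _ _ [set h | m h != 0]).
- by apply: eq_fsbigr => h _; rewrite fsvD mulrDr.
- exact: (fsPP m).1.
- by move=> h _; rewrite mulf_eq0 negb_or => /andP [nz _].
- by move=> h _; rewrite mulf_eq0 negb_or => /andP [nz _].
Qed.

Lemma beta0l n : beta 0 n = 0.
Proof. by rewrite /beta fsum0 // => h _; rewrite fsv0 mul0r. Qed.

Lemma beta_suml (I : Type) (l : seq I) (F : I -> M) n :
  beta (\sum_(i <- l) F i) n = \sum_(i <- l) beta (F i) n.
Proof.
elim: l => [|i l IH]; first by rewrite !big_nil beta0l.
by rewrite !big_cons betaDl IH.
Qed.

Lemma beta_bal_del (c' : R) k f n : gdom k = u -> in_steinberg f ->
  beta (ractM (delM u c' k) f) n = beta (delM u c' k) (actN f n).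
Proof.
move=> dk sf; rewrite /beta (ractM_del Hample) //.
rewrite (eq_fsbigr (fun h => f (mul k (inv h)) * c' * n (grng h))); last first.
  by move=> h /set_mem dh; rewrite asboolT.
rewrite (fsum_reindex (P := [set al | grng al = grng k]) (Q := PM u) (h := fun al => mul (inv al) k)).
- rewrite [RHS](fsum_single (x0 := k)) //; last first.
    by move=> h _ ne; rewrite delME // /sdel; case: (eqVneq h k) => // _; rewrite mul0r.
  rewrite delME // /sdel eqxx actNE; last exact: (stein_FF2 Hample).
  rewrite /actR asboolT; last by exists k.
  rewrite mulr_fsumr; apply: eq_fsbigr => al /set_mem /= e.
  have cak : gcomp (inv al) k by apply/compE; rewrite dom_inv.
  rewrite (inv_mul cak) ginvK mulKV' // (rng_mul cak) /aN !rng_inv.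
  by rewrite mulrAC mulrC.
- by move=> al /= e; rewrite /PM /= dom_mul // ; apply/compE; rewrite dom_inv.
- move=> al al' /= e1 e2 e.
  have c1 : gcomp (inv al) k by apply/compE; rewrite dom_inv.
  have c2 : gcomp (inv al') k by apply/compE; rewrite dom_inv.
  apply: inv_inj; by rewrite -(mulKr c1) e mulKr.
- move=> h /= dh; exists (mul k (inv h)).
  have ckh : gcomp k (inv h) by apply/compE; rewrite rng_inv dh dk.
  split; first by rewrite /= rng_mul.
  have c1 : gcomp h (inv k) by apply/compE; rewrite rng_inv dh dk.
  rewrite (inv_mul ckh) ginvK (mulA c1 (gcompVx k)) mulVx.
  by rewrite dk -dh mul_dom.
Qed.

Lemma ractM0 f : in_steinberg f -> ractM (0 : M) f = 0.
Proof. move=> sf; exact: (ract0 (@hM3 G u) (@hM4 G u) (@hM5 G u) Hample 0 sf). Qed.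

Lemma ractMD f (m m' : M) : in_steinberg f -> ractM (m + m') f = ractM m f + ractM m' f.
Proof. move=> sf; exact: (ractD (@hM3 G u) (@hM4 G u) (@hM5 G u) Hample m m' sf). Qed.

Lemma ractMN f (m : M) : in_steinberg f -> ractM (- m) f = - ractM m f.
Proof. move=> sf; exact: (ractN (@hM3 G u) (@hM4 G u) (@hM5 G u) Hample m sf). Qed.

Lemma beta_balanced : balanced (@ractM G R u) (@actN G R u) beta.
Proof.
split; [exact: betaDl|exact: betaDr|].
move=> m f n sf.
have [s [hs ->]] := M_decomp m.
have hf : FF2 (fun g => f (inv g)) by apply/FF2_inv/(stein_FF2 Hample).
have -> : ractM (\sum_(y <- s) delM u (m y) y) f = \sum_(y <- s) ractM (delM u (m y) y) f.
  elim: s {hs} => [|y s IH]; first by rewrite !big_nil ractM0.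
  by rewrite !big_cons ractMD // IH.
rewrite !beta_suml; apply: eq_big_seq => y ys.
by apply: beta_bal_del => //; apply: hs.
Qed.

End Fin.


Section Final.
Variable G : TopGroupoid.
Variable R : fieldType.
Hypothesis Hample : ample G.
Hypothesis Hhaus : hausdorff G.
Variable u : G.
Hypothesis hu : unit_space u.
Variable x : G.
Hypothesis hxd : gdom x = u.
Hypothesis hxr : grng x = u.
Variable B : G -> Prop.
Hypothesis oB : obis B.
Hypothesis Bx : B (ginv x).

Local Notation mul := (@gmul G).
Local Notation inv := (@ginv G).
Local Notation M := (FS R (PM u)).
Local Notation N := (FS R (PN u)).

Lemma du : gdom u = u. Proof. exact: unit_dom. Qed.

Lemma rho_delta : rho hxd (delM u 1 u) = ractM (delM u (1 : R) u) (sind 1 B).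
Proof.
have du' : gdom u = u := du.
apply: fs_eq => h; rewrite (ractM_del Hample) //; last exact: sind_stein.
rewrite /= /rhoR.
case: (pselect (gdom h = u)) => [dh|ndh]; last by rewrite !asboolF.
rewrite !asboolT // delME; last exact: du.
rewrite /sdel /sind mulr1.
have e1 : mul (grng (inv h)) (inv h) = inv h := mul_rng _.
rewrite rng_inv dh in e1; rewrite e1.
have chx : gcomp h (inv x) by apply/compE; rewrite rng_inv dh hxd.
case: (eqVneq h x) => [->|ne].
  by rewrite mulxV hxr eqxx asboolT.
have n1 : mul h (inv x) != u.
  apply/eqP => e; move/eqP: ne; apply.
  have := mulKr chx; rewrite ginvK e => <-.
  by rewrite -hxr mul_rng.
rewrite (negPf n1) asboolF //.
move=> Bh; move/eqP: ne; apply.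
apply: inv_inj; apply: (obis_rinj oB) => //.
by rewrite !rng_inv dh hxd.
Qed.

Lemma actN_delta : actN (sind 1 B) (delN u (1 : R) u) = delN u 1 u.
Proof.
have Pu' : PN u u by exists u; rewrite du unit_rng.
have hc : forall al, B al -> (delN u (1 : R) u) (gdom al) != 0 -> al = inv x.
  move=> al Bal; rewrite delNE // /sdel; case: (eqVneq (gdom al) u) => [e _|_]; last by rewrite eqxx.
  by apply: (obis_dinj oB) => //; rewrite e dom_inv hxr.
apply: fs_eq => t; rewrite (@actN_loc _ _ Hample Hhaus u _ 1 B (inv x) oB Bx hc).
by rewrite delNE // dom_inv rng_inv hxr hxd /sdel eqxx mulr1.
Qed.

Lemma tensor_psi (Z : zmodType) (bt : M -> N -> Z) :
  balanced (@ractM G R u) (@actN G R u) bt ->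
  bt (psi hxd (delM u 1 u)) (delN u 1 u) = 0.
Proof.
case=> h1 h2 h3.
have b0 : forall n, bt 0 n = 0.
  move=> n; have := h1 0 0 n; rewrite addr0 => e.
  by apply: (addrI (bt 0 n)); rewrite addr0 -e.
have bN : forall m n, bt (- m) n = - bt m n.
  move=> m n; apply/eqP; rewrite -addr_eq0 -h1 addNr b0 //.
rewrite /psi h1 rho_delta h3; last exact: sind_stein.
by rewrite actN_delta bN subrr.
Qed.

Lemma beta_del : beta (delM u 1 u) (delN u (1 : R) u) = 1.
Proof.
have Pu' : PN u u by exists u; rewrite du unit_rng.
have du' : gdom u = u := du.
rewrite /beta (fsum_single (x0 := u)) //.
  by rewrite delME ?du // delNE // unit_rng // /sdel eqxx mulr1.
by move=> h _ ne; rewrite delME ?du // /sdel; case: (eqVneq h u) => // _; rewrite mul0r.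
Qed.

End Final.

Theorem proposition3p3 (Gam : OrderedGroup) (G : TopGroupoid) (c : G -> Gam)
    (R : fieldType) :
  ample G -> hausdorff G -> grading c -> left_SF G R ->
  forall u : G, unit_space u -> aperiodic_unit c u.
Proof.
move=> Hample Hhaus Hgrad HSF u hu x hxd hxr.
apply: contrapT => hcx.
have [B [oB Bx]] := obis_all Hample (ginv x).
have flat := HSF _ (@actN G R u) (N_left_module R Hample u) (@N_unital G R Hample Hhaus u)
  (N_simple R Hample Hhaus hu).
have rm := M_right_module R Hample u.
have ru := @M_unital G R Hample Hhaus u.
have lin0 : right_linear (@ractM G R u) (@ractM G R u) (fun _ => 0).
  split; first by move=> m m'; rewrite addr0.
  by move=> m f sf; rewrite ractM0.
have ex : forall m : FS R (PM u), (exists m1 : FS R (PM u), m = (fun _ => 0) m1) <-> psi hxd m = 0.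
  move=> m; split.
    case=> _ ->; rewrite /psi subr0.
    apply: fs_eq => h; rewrite /= /rhoR.
    by case: (pselect (gdom h = u)) => [dh|ndh]; [rewrite asboolT|rewrite asboolF].
  by move=> /(psi_inj Hgrad hxr hcx) ->; exists 0.
have := flat _ _ _ _ _ _ _ _ rm ru rm ru rm ru lin0 (psi_linear R Hample hxd hxr) ex
  [:: (delM u 1 u, delN u 1 u)].
case=> _ /(_ _) [].
  move=> Z bt hb; rewrite /tmap /= big_cons big_nil addr0 /=.
  exact: (tensor_psi Hample Hhaus hu hxd hxr oB Bx hb).
move=> s /(_ _ (@beta G R u) (beta_balanced R Hample u)).
rewrite big_cat /tneg /= big_cons big_nil addr0.
have -> : \sum_(p <- tmap (fun=> 0) s) beta p.1 p.2 = 0.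
  elim: s => [|q s IH]; first by rewrite big_nil.
  by rewrite /tmap /= big_cons /= beta0l add0r; exact: IH.
rewrite add0r.
have bN : beta (- delM u 1 u) (delN u (1 : R) u) = - beta (delM u 1 u) (delN u 1 u).
  apply/eqP; rewrite -addr_eq0 -betaDl addNr beta0l //.
rewrite /= bN (beta_del R hu) => /eqP; rewrite oppr_eq0 oner_eq0.
by [].
Qed.
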